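(* Let $X=\ell_p$ for some $1\le p<\infty$, or $X=c_0$, considered as a Banach algebra under coordinatewise multiplication, and let $\lambda\in\mathbb C$ with $|\lambda|>1$. Let $\lambda B(x(1),x(2),\ldots)=(\lambda x(2),\lambda x(3),\ldots)$. Then $\lambda B$ does not have any frequently hypercyclic algebra. Furthermore, no hypercyclic algebra for $\lambda B$ can contain a frequently hypercyclic vector.
   Context: For an operator $T$ on $X$, a vector $x$ is hypercyclic if its orbit $\{T^nx:n\ge0\}$ is dense; it is frequently hypercyclic if for every non-empty open $U\subset X$ the set $\{n\in\mathbb N_0:T^nx\in U\}$ has positive lower density (lower density of $A\subset\mathbb N_0$: $\liminf_{N\to\infty}\frac{\mathrm{card}(A\cap[0,N])}{N+1}$). A hypercyclic (resp. frequently hypercyclic) algebra for $T$ is a subalgebra $\mathcal A\neq\{0\}$ of $X$ such that every non-zero element of $\mathcal A$ is a hypercyclic (resp. frequently hypercyclic) vector for $T$. *)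

(* Defs.v *)
From Stdlib Require Import Reals ClassicalEpsilon.
From Coquelicot Require Import Coquelicot.
Open Scope R_scope.

Definition seqC := nat -> C.

(** a^q for a >= 0 and q > 0, with the convention 0^q = 0. *)
Definition powR (a q : R) : R :=
  if Rle_dec a 0 then 0 else Rpower a q.

Inductive space := Lp (p : R) | C0.

Definition valid_space (s : space) : Prop :=
  match s with Lp p => 1 <= p | C0 => True end.

Definition inX (s : space) (x : seqC) : Prop :=
  match s with
  | Lp p => ex_series (fun n => powR (Cmod (x n)) p)
  | C0 => is_lim_seq (fun n => Cmod (x n)) 0
  end.

Definition normX (s : space) (x : seqC) : R :=
  match s with
  | Lp p => powR (Series (fun n => powR (Cmod (x n)) p)) (1 / p)
  | C0 => real (Lub_Rbar (fun r => exists n, r = Cmod (x n)))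
  end.

Definition seq_add (x y : seqC) : seqC := fun n => Cplus (x n) (y n).
Definition seq_sub (x y : seqC) : seqC := fun n => Cminus (x n) (y n).
Definition seq_scal (a : C) (x : seqC) : seqC := fun n => Cmult a (x n).
Definition seq_mul (x y : seqC) : seqC := fun n => Cmult (x n) (y n).
Definition seq0 : seqC := fun _ => RtoC 0.

Definition openX (s : space) (U : seqC -> Prop) : Prop :=
  (forall x, U x -> inX s x) /\
  (forall x, U x -> exists eps, 0 < eps /\
     forall y, inX s y -> normX s (seq_sub y x) < eps -> U y).

Definition lamB (l : C) (x : seqC) : seqC := fun n => Cmult l (x (S n)).

Definition orbit (T : seqC -> seqC) (x : seqC) (n : nat) : seqC :=
  Nat.iter n T x.

Definition ind (P : Prop) : nat :=
  if excluded_middle_informative P then 1%nat else 0%nat.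

Fixpoint cnt (A : nat -> Prop) (N : nat) : nat :=
  match N with
  | O => ind (A O)
  | S M => (cnt A M + ind (A (S M)))%nat
  end.

Definition lower_density (A : nat -> Prop) : Rbar :=
  LimInf_seq (fun N => INR (cnt A N) / INR (S N)).

Definition pos_lower_density (A : nat -> Prop) : Prop :=
  Rbar_lt 0 (lower_density A).

Definition hypercyclic (s : space) (T : seqC -> seqC) (x : seqC) : Prop :=
  inX s x /\
  forall U, openX s U -> (exists u, U u) -> exists n, U (orbit T x n).

Definition freq_hypercyclic (s : space) (T : seqC -> seqC) (x : seqC) : Prop :=
  inX s x /\
  forall U, openX s U -> (exists u, U u) ->
    pos_lower_density (fun n => U (orbit T x n)).

(** (Complex, not necessarily unital) subalgebras of X for the
    coordinatewise product. *)
Definition subalgebra (s : space) (A : seqC -> Prop) : Prop :=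
  (forall x, A x -> inX s x) /\
  A seq0 /\
  (forall x y, A x -> A y -> A (seq_add x y)) /\
  (forall a x, A x -> A (seq_scal a x)) /\
  (forall x y, A x -> A y -> A (seq_mul x y)).

Definition hc_algebra (s : space) (T : seqC -> seqC) (A : seqC -> Prop) : Prop :=
  subalgebra s A /\ (exists a, A a /\ a <> seq0) /\
  forall a, A a -> a <> seq0 -> hypercyclic s T a.

Definition fhc_algebra (s : space) (T : seqC -> seqC) (A : seqC -> Prop) : Prop :=
  subalgebra s A /\ (exists a, A a /\ a <> seq0) /\
  forall a, A a -> a <> seq0 -> freq_hypercyclic s T a.

(* Main.v *)
Require Import Defs.
From Stdlib Require Import Reals Lia Lra ClassicalEpsilon.
From Coquelicot Require Import Coquelicot.
Open Scope R_scope.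

Lemma powR_ge0 a q : 0 <= powR a q.
Proof. unfold powR. destruct (Rle_dec a 0). lra. unfold Rpower. left; apply exp_pos. Qed.

Lemma powR_pos a q : 0 < a -> powR a q = Rpower a q.
Proof. intros. unfold powR. destruct (Rle_dec a 0); [lra|auto]. Qed.

Lemma ex_series_zero : ex_series (fun _ : nat => 0).
Proof.
  assert (H : Rabs (1/2) < 1) by (rewrite Rabs_pos_eq; lra).
  pose proof (is_series_scal_r 0 _ _ (is_series_geom _ H)) as H2.
  eapply ex_series_ext; [|exists ((/ (1 - 1/2)) * 0); exact H2].
  intros n; simpl; ring.
Qed.

Lemma inX_tz s x : valid_space s -> inX s x ->
  forall eps, 0 < eps -> exists N, forall k, (N <= k)%nat -> Cmod (x k) < eps.
Proof.
  intros Hv Hx eps He. destruct s as [p|]; simpl in *.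
  - apply ex_series_lim_0 in Hx. apply is_lim_seq_spec in Hx.
    assert (Hp: 0 < Rpower eps p) by (unfold Rpower; apply exp_pos).
    destruct (Hx (mkposreal _ Hp)) as [N HN]. exists N. intros k Hk.
    specialize (HN k Hk). simpl in HN.
    destruct (Rlt_or_le (Cmod (x k)) eps) as [|Hge]; auto.
    rewrite powR_pos in HN by lra. rewrite Rminus_0_r, Rabs_pos_eq in HN.
    2:{ unfold Rpower; left; apply exp_pos. }
    assert (Rpower eps p <= Rpower (Cmod (x k)) p) by (apply Rle_Rpower_l; lra).
    lra.
  - apply is_lim_seq_spec in Hx. destruct (Hx (mkposreal _ He)) as [N HN].
    exists N. intros k Hk. specialize (HN k Hk). simpl in HN.
    rewrite Rminus_0_r, Rabs_pos_eq in HN; auto. apply Cmod_ge_0.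
Qed.

Lemma finite_max (u : nat -> R) N : exists M, forall n, (n < N)%nat -> u n <= M.
Proof.
  induction N. exists 0. intros; lia.
  destruct IHN as [M HM]. exists (Rmax M (u N)). intros n Hn.
  destruct (Nat.eq_dec n N). subst; apply Rmax_r.
  eapply Rle_trans; [apply HM; lia| apply Rmax_l].
Qed.

Lemma finite_max_lt1 (u : nat -> R) N : (forall n, u n < 1) ->
  exists M, M < 1 /\ forall n, (n < N)%nat -> u n <= M.
Proof.
  intros H. induction N. exists 0. split. lra. intros; lia.
  destruct IHN as [M [HM1 HM]]. exists (Rmax M (u N)). split.
  apply Rmax_case; auto.
  intros n Hn.
  destruct (Nat.eq_dec n N). subst; apply Rmax_r.
  eapply Rle_trans; [apply HM; lia| apply Rmax_l].
Qed.

Lemma inX_bounded s x : valid_space s -> inX s x -> exists M, forall k, Cmod (x k) <= M.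
Proof.
  intros Hv Hx. destruct (inX_tz s x Hv Hx 1 Rlt_0_1) as [N HN].
  destruct (finite_max (fun k => Cmod (x k)) N) as [M HM].
  exists (Rmax M 1). intros k. destruct (Compare_dec.le_lt_dec N k).
  left. eapply Rlt_le_trans; [apply HN; auto| apply Rmax_r].
  eapply Rle_trans; [apply HM; auto| apply Rmax_l].
Qed.

Lemma sum_n_ge_term (f : nat -> R) : (forall i, 0 <= f i) ->
  forall n, 0 <= sum_n f n /\ forall k, (k <= n)%nat -> f k <= sum_n f n.
Proof.
  intros Hf n. induction n.
  - rewrite sum_O. split; auto. intros k Hk. replace k with 0%nat by lia. lra.
  - rewrite sum_Sn. destruct IHn as [H0 H1]. unfold plus; simpl. split.
    specialize (Hf (S n)); lra.
    intros k Hk. destruct (Nat.eq_dec k (S n)). subst; lra.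
    specialize (H1 k ltac:(lia)). specialize (Hf (S n)). lra.
Qed.

Lemma coord_bound s w : valid_space s -> inX s w -> forall k, Cmod (w k) <= normX s w.
Proof.
  intros Hv Hw k. destruct s as [p|]; simpl in *.
  - set (f := fun n => powR (Cmod (w n)) p).
    assert (Hfk : f k <= Series f).
    { pose proof (Series_correct _ Hw) as HS.
      apply (is_lim_seq_le_loc (fun n => f k) (sum_n f) (f k) (Series f)).
      2: apply is_lim_seq_const.
      2: exact HS.
      exists k. intros n Hn. apply sum_n_ge_term; auto. intros; apply powR_ge0. }
    destruct (Rle_or_lt (Cmod (w k)) 0) as [H0|H0].
    + eapply Rle_trans; [exact H0|apply powR_ge0].
    + unfold f in Hfk. rewrite powR_pos in Hfk by auto.
      assert (HSp : 0 < Series f). { eapply Rlt_le_trans; [|exact Hfk]. unfold Rpower; apply exp_pos. }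
      rewrite powR_pos by auto.
      rewrite <- (Rpower_1 (Cmod (w k))) at 1 by auto.
      replace 1 with (p * (1/p)) at 1 by (field; lra).
      rewrite <- Rpower_mult. apply Rle_Rpower_l.
      unfold Rdiv; rewrite Rmult_1_l; left; apply Rinv_0_lt_compat; lra.
      split; auto. unfold Rpower; apply exp_pos.
  - destruct (inX_bounded C0 w I Hw) as [M HM].
    destruct (Lub_Rbar_correct (fun r => exists n, r = Cmod (w n))) as [Hub Hl].
    assert (H1 := Hub (Cmod (w k)) (ex_intro _ k eq_refl)).
    assert (H2 : Rbar_le (Lub_Rbar (fun r => exists n, r = Cmod (w n))) M).
    { apply Hl. intros r [n ->]. apply HM. }
    destruct (Lub_Rbar (fun r => exists n, r = Cmod (w n))); simpl in *; tauto.
Qed.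
Lemma Cmod_sub_le (a b : C) : Cmod (Cminus a b) <= Cmod a + Cmod b.
Proof. unfold Cminus. rewrite <- (Cmod_opp b). apply Cmod_triangle. Qed.

Lemma Cmod_sub_ge (a b : C) : Cmod a - Cmod (Cminus a b) <= Cmod b.
Proof.
  pose proof (Cmod_triangle b (Cminus a b)).
  replace (Cplus b (Cminus a b)) with a in H by (apply injective_projections; simpl; ring).
  lra.
Qed.

Lemma inX_sub s z y : valid_space s -> inX s z -> inX s y -> inX s (seq_sub z y).
Proof.
  intros Hv Hz Hy. destruct s as [p|]; simpl in *.
  - apply (ex_series_le (V:=R_CompleteNormedModule) _ (fun n => Rpower 2 p * (powR (Cmod (z n)) p + powR (Cmod (y n)) p))).
    2:{ apply (ex_series_scal (V:=R_NormedModule) (Rpower 2 p) (fun n => (powR (Cmod (z n)) p + powR (Cmod (y n)) p))).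
        apply (ex_series_plus (V:=R_NormedModule)); auto. }
    intros n. change (norm ?x) with (Rabs x). rewrite Rabs_pos_eq by apply powR_ge0.
    unfold seq_sub. set (a := Cmod (z n)). set (b := Cmod (y n)).
    pose proof (Cmod_sub_le (z n) (y n)) as Hd. fold a b in Hd.
    set (d := Cmod (Cminus (z n) (y n))) in *.
    assert (H2p : 0 < Rpower 2 p) by (unfold Rpower; apply exp_pos).
    assert (Ha := powR_ge0 a p). assert (Hb := powR_ge0 b p).
    destruct (Rle_or_lt d 0) as [H0|H0].
    { unfold powR at 1. destruct (Rle_dec d 0); [|lra]. apply Rmult_le_pos; lra. }
    assert (Hab : 0 <= a /\ 0 <= b) by (split; apply Cmod_ge_0).
    assert (HMa := Rmax_l a b). assert (HMb := Rmax_r a b).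
    set (M := Rmax a b) in *.
    assert (Hm : 0 < M) by lra.
    rewrite powR_pos by lra.
    apply Rle_trans with (Rpower (2 * M) p).
    { apply Rle_Rpower_l. destruct Hv; lra. lra. }
    rewrite <- Rpower_mult_distr by lra. apply Rmult_le_compat_l; [lra|].
    unfold M. destruct (Rle_dec a b).
    + rewrite Rmax_right by auto. rewrite <- powR_pos. lra. unfold M in Hm; rewrite Rmax_right in Hm; auto.
    + rewrite Rmax_left by lra. rewrite <- powR_pos. lra. unfold M in Hm; rewrite Rmax_left in Hm; lra.
  - apply (is_lim_seq_le_le (fun _ => 0) _ (fun n => Cmod (z n) + Cmod (y n))).
    + intros n. split. apply Cmod_ge_0. apply Cmod_sub_le.
    + apply is_lim_seq_const.
    + replace (Finite 0) with (Finite (0 + 0)) by (f_equal; ring).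
      apply is_lim_seq_plus'; auto.
Qed.

Lemma inX_e0 s c : valid_space s -> inX s (fun j => match j with O => c | _ => RtoC 0 end).
Proof.
  intros Hv. destruct s as [p|]; simpl.
  - apply ex_series_incr_1. eapply ex_series_ext; [|apply ex_series_zero].
    intros n; simpl. rewrite Cmod_0. unfold powR. destruct (Rle_dec 0 0); lra.
  - apply is_lim_seq_incr_1. eapply is_lim_seq_ext; [|apply is_lim_seq_const].
    intros n; simpl. rewrite Cmod_0. auto.
Qed.

Lemma inX_seq0 s : valid_space s -> inX s seq0.
Proof.
  intros Hv. pose proof (inX_e0 s (RtoC 0) Hv) as H.
  destruct s; simpl in *.
  - eapply ex_series_ext; [|exact H]. intros [|n]; reflexivity.
  - eapply is_lim_seq_ext; [|exact H]. intros [|n]; reflexivity.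
Qed.

Lemma Cmod_sub_ge' (a b : C) : Cmod a - Cmod (Cminus b a) <= Cmod b.
Proof.
  replace (Cminus b a) with (Copp (Cminus a b)) by (apply injective_projections; simpl; ring).
  rewrite Cmod_opp. apply Cmod_sub_ge.
Qed.

Definition U1 s : seqC -> Prop := fun y => inX s y /\ forall k, Cmod (y k) < 1.
Definition W s L : seqC -> Prop := fun y => inX s y /\ L < Cmod (y O).

Lemma open_U1 s : valid_space s -> openX s (U1 s) /\ exists u, U1 s u.
Proof.
  intros Hv. split; [split|].
  - intros x [Hx _]; auto.
  - intros y [Hy Hy1].
    destruct (inX_tz s y Hv Hy (1/2)) as [N HN]; [lra|].
    destruct (finite_max_lt1 (fun k => Cmod (y k)) N Hy1) as [M [HM1 HM]].
    assert (HMa := Rmax_l M (1/2)). assert (HMb := Rmax_r M (1/2)).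
    assert (HM2 : Rmax M (1/2) < 1) by (apply Rmax_case; lra).
    exists (1 - Rmax M (1/2)). split; [lra|].
    intros z Hz Hn. split; auto. intros k.
    pose proof (coord_bound s _ Hv (inX_sub s z y Hv Hz Hy) k) as Hc.
    pose proof (Cmod_sub_ge (z k) (y k)) as Ht. unfold seq_sub in Hc, Hn.
    assert (Cmod (y k) <= Rmax M (1/2)).
    { destruct (Compare_dec.le_lt_dec N k).
      - left; eapply Rlt_le_trans; [apply HN; auto|auto].
      - eapply Rle_trans; [apply HM; auto|auto]. }
    lra.
  - exists seq0. split. apply inX_seq0; auto. intros k; unfold seq0. rewrite Cmod_0; lra.
Qed.

Lemma open_W s L : valid_space s -> 0 <= L -> openX s (W s L) /\ exists u, W s L u.
Proof.
  intros Hv HL. split; [split|].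
  - intros x [Hx _]; auto.
  - intros y [Hy Hy0]. exists (Cmod (y O) - L). split; [lra|].
    intros z Hz Hn. split; auto.
    pose proof (coord_bound s _ Hv (inX_sub s z y Hv Hz Hy) O) as Hc.
    pose proof (Cmod_sub_ge' (y O) (z O)) as Ht. unfold seq_sub in Hc, Hn. lra.
  - exists (fun j => match j with O => RtoC (L + 1) | _ => RtoC 0 end). split.
    apply inX_e0; auto. simpl. rewrite Cmod_R, Rabs_pos_eq; lra.
Qed.

Lemma ind_le1 (P : Prop) : (Defs.ind P <= 1)%nat.
Proof. unfold Defs.ind; destruct (excluded_middle_informative P); lia. Qed.

Lemma cnt_le_S E N : (cnt E N <= S N)%nat.
Proof. induction N; simpl. apply ind_le1. pose proof (ind_le1 (E (S N))). lia. Qed.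

Lemma cnt_bound E N b : (forall n, (n <= N)%nat -> E n -> (n < b)%nat) -> (cnt E N <= b)%nat.
Proof.
  induction N; intros H; simpl.
  - unfold Defs.ind; destruct (excluded_middle_informative (E O)) as [h|h].
    specialize (H O (le_n _) h); lia. lia.
  - unfold Defs.ind at 1; destruct (excluded_middle_informative (E (S N))) as [h|h].
    + specialize (H (S N) (le_n _) h). pose proof (cnt_le_S E N). lia.
    + rewrite Nat.add_0_r. apply IHN. intros n Hn; apply H; lia.
Qed.

Lemma density E : pos_lower_density E ->
  exists q, (1 <= q)%nat /\ exists N0, forall N, (N0 <= N)%nat ->
    exists n, E n /\ (n <= N)%nat /\ (N < (n + 1) * q)%nat.
Proof.
  unfold pos_lower_density, lower_density.
  set (u := fun N => INR (cnt E N) / INR (S N)).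
  destruct (ex_LimInf_seq u) as [l Hl]. rewrite (is_LimInf_seq_unique _ _ Hl).
  intros Hpos.
  assert (Hd : exists d, 0 < d /\ exists N0, forall N, (N0 <= N)%nat -> d < u N).
  { destruct l as [l| |]; simpl in Hpos, Hl; try contradiction.
    - assert (Hl2 : 0 < l / 2) by lra.
      destruct (Hl (mkposreal _ Hl2)) as [_ [N0 HN0]]. exists (l/2). split; auto.
      exists N0. intros N HN. specialize (HN0 N HN). simpl in HN0. lra.
    - destruct (Hl (1/2)) as [N0 HN0]. exists (1/2). split. lra. exists N0; auto. }
  destruct Hd as [d [Hd [N0 HN0]]].
  destruct (INR_archimed d 1 Hd) as [q Hq].
  assert (Hq1 : (1 <= q)%nat).
  { destruct q. simpl in Hq. lra. lia. }
  exists q. split; auto. exists N0. intros N HN.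
  specialize (HN0 N HN). unfold u in HN0.
  apply Classical_Prop.NNPP. intros Hno.
  assert (Hc : (cnt E N <= N / q)%nat).
  { apply cnt_bound. intros n Hn HE.
    assert (((n+1) * q <= N)%nat).
    { destruct (Compare_dec.le_lt_dec ((n+1)*q) N); auto. exfalso; apply Hno; eauto. }
    assert (n + 1 <= N / q)%nat. { apply Nat.div_le_lower_bound; lia. }
    lia. }
  assert (Hmd : (q * (N / q) <= N)%nat) by (apply Nat.Div0.mul_div_le).
  apply le_INR in Hc. apply le_INR in Hmd. rewrite mult_INR in Hmd.
  assert (HSN : 0 < INR (S N)) by (apply lt_0_INR; lia).
  assert (Hcnt : d * INR (S N) < INR (cnt E N)).
  { apply (Rmult_lt_compat_r (INR (S N))) in HN0; auto.
    unfold Rdiv in HN0. rewrite Rmult_assoc, Rinv_l in HN0 by lra. lra. }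
  rewrite S_INR in Hcnt.
  assert (HN' : 0 <= INR N) by apply pos_INR.
  assert (0 < INR q) by (apply lt_0_INR; lia).
  set (a := INR (N / q)) in *. set (c := INR (cnt E N)) in *.
  assert (d * (INR N + 1) * INR q < a * INR q) by (apply Rmult_lt_compat_r; [lra|lra]).
  assert (d * INR q * (INR N + 1) > 1 * (INR N + 1)) by (apply Rmult_lt_compat_r; lra).
  nra.
Qed.

Fixpoint cpow (z : C) (n : nat) : C :=
  match n with O => RtoC 1 | S n => Cmult z (cpow z n) end.

Lemma Cmod_cpow z n : Cmod (cpow z n) = Cmod z ^ n.
Proof. induction n; simpl. apply Cmod_1. rewrite Cmod_mult, IHn; auto. Qed.

Lemma orbit_eq l y n : forall j, orbit (lamB l) y n j = Cmult (cpow l n) (y (n + j)%nat).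
Proof.
  induction n; intros j.
  - simpl. rewrite Cmult_1_l. reflexivity.
  - change (orbit (lamB l) y (S n) j) with (lamB l (orbit (lamB l) y n) j).
    unfold lamB. rewrite IHn. simpl. rewrite Cmult_assoc. rewrite Nat.add_succ_r. reflexivity.
Qed.

Fixpoint sp (x : seqC) (r : nat) : seqC :=
  match r with O => x | S r => seq_mul x (sp x r) end.

Lemma Cmod_sp x r j : Cmod (sp x r j) = Cmod (x j) ^ (S r).
Proof. induction r; simpl. ring. unfold seq_mul. rewrite Cmod_mult, IHr. simpl; ring. Qed.

Lemma sp_in s A x r : subalgebra s A -> A x -> A (sp x r).
Proof.
  intros (_ & _ & _ & _ & Hm) Hx. induction r; simpl; auto.
Qed.

Fixpoint fsum (F : nat -> R) (N : nat) : R :=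
  match N with O => 0 | S N => fsum F N + F N end.

Lemma fsum_bound F : (forall i, 0 <= F i) ->
  forall N, 0 <= fsum F N /\ forall m, (m < N)%nat -> F m <= fsum F N.
Proof.
  intros HF N. induction N; simpl. split. lra. intros; lia.
  destruct IHN as [H0 H1]. split. specialize (HF N); lra.
  intros m Hm. destruct (Nat.eq_dec m N). subst; lra.
  specialize (H1 m ltac:(lia)). specialize (HF N). lra.
Qed.

Lemma fhc_hc s T x : valid_space s -> freq_hypercyclic s T x -> hypercyclic s T x.
Proof.
  intros Hv [Hx H]. split; auto. intros U HU Hne.
  destruct (density _ (H U HU Hne)) as [q [_ [N0 HN0]]].
  destruct (HN0 N0 (le_n _)) as [n [Hn _]]. eauto.
Qed.

Lemma fhc_ne0 s l x : valid_space s -> freq_hypercyclic s (lamB l) x ->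
  exists n, 0 < Cmod (x n).
Proof.
  intros Hv Hf. destruct (fhc_hc s _ x Hv Hf) as [_ H].
  destruct (open_W s 0 Hv (Rle_refl 0)) as [HU Hne].
  destruct (H _ HU Hne) as [n [_ Hn]].
  rewrite orbit_eq, Cmod_mult, Cmod_cpow, Nat.add_0_r in Hn.
  exists n. pose proof (Cmod_ge_0 (x n)). pose proof (Cmod_ge_0 l).
  pose proof (pow_le (Cmod l) n H1).
  destruct H0 as [|H0]; auto. rewrite <- H0 in Hn. lra.
Qed.

Lemma key s l A x : valid_space s -> 1 < Cmod l -> hc_algebra s (lamB l) A ->
  A x -> freq_hypercyclic s (lamB l) x -> False.
Proof.
  intros Hv Hl [Hsub [_ Hhc]] HAx Hfx.
  destruct (fhc_ne0 s l x Hv Hfx) as [n0 Hn0].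
  destruct Hfx as [Hxin Hfx].
  destruct (open_U1 s Hv) as [HU1 HU1ne].
  destruct (density _ (Hfx _ HU1 HU1ne)) as [q [Hq1 [N0 HN0]]].
  set (F := fun m => Cmod l ^ m * Cmod (x m) ^ q).
  assert (HF0 : forall m, 0 <= F m).
  { intros m. unfold F. apply Rmult_le_pos; apply pow_le; [lra|apply Cmod_ge_0]. }
  assert (Hbd : forall m, (N0 <= m)%nat -> F m <= Cmod l ^ q).
  { intros m Hm. destruct (HN0 m Hm) as [n [[_ Hk] [Hnm Hmq]]].
    specialize (Hk (m - n)%nat). rewrite orbit_eq, Cmod_mult, Cmod_cpow in Hk.
    replace (n + (m - n))%nat with m in Hk by lia.
    unfold F.
    assert (Hxm := Cmod_ge_0 (x m)).
    assert (Hln : 0 <= Cmod l ^ n) by (apply pow_le; lra).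
    apply Rle_trans with (Cmod l ^ ((n + 1) * q) * Cmod (x m) ^ q).
    { apply Rmult_le_compat_r. apply pow_le; auto. apply Rle_pow; lia || lra. }
    rewrite pow_mult, pow_add, pow_1, Rpow_mult_distr.
    replace ((Cmod l ^ n) ^ q * Cmod l ^ q * Cmod (x m) ^ q)
      with ((Cmod l ^ n * Cmod (x m)) ^ q * Cmod l ^ q) by (rewrite Rpow_mult_distr; ring).
    rewrite <- (Rmult_1_l (Cmod l ^ q)) at 2.
    apply Rmult_le_compat_r. apply pow_le; lra.
    rewrite <- (pow1 q). apply pow_incr. split. apply Rmult_le_pos; auto. lra. }
  destruct q as [|r]; [lia|].
  set (y := sp x r).
  assert (Hy : A y) by (apply sp_in with s; auto).
  assert (Hyne : y <> seq0).
  { intros Heq. assert (H := Cmod_sp x r n0). fold y in H. rewrite Heq in H.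
    unfold seq0 in H. rewrite Cmod_0 in H. pose proof (pow_lt _ (S r) Hn0). lra. }
  destruct (Hhc y Hy Hyne) as [_ Hh].
  destruct (fsum_bound F HF0 N0) as [Hs0 Hs1].
  set (L := Cmod l ^ S r + fsum F N0).
  assert (HL : 0 <= L) by (unfold L; pose proof (pow_le (Cmod l) (S r)); lra).
  destruct (open_W s L Hv HL) as [HW HWne].
  destruct (Hh _ HW HWne) as [n [_ Hn]].
  rewrite orbit_eq, Cmod_mult, Cmod_cpow, Nat.add_0_r in Hn. unfold y in Hn.
  rewrite Cmod_sp in Hn. fold (F n) in Hn.
  destruct (Compare_dec.le_lt_dec N0 n).
  - specialize (Hbd n l0). unfold L in Hn. lra.
  - specialize (Hs1 n l0). unfold L in Hn. pose proof (pow_le (Cmod l) (S r)). lra.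
Qed.

Theorem corollary1p3 (s : space) (l : C) :
  valid_space s -> 1 < Cmod l ->
  (~ exists A, fhc_algebra s (lamB l) A) /\
  (forall A, hc_algebra s (lamB l) A ->
     ~ exists x, A x /\ freq_hypercyclic s (lamB l) x).
Proof.
  intros Hv Hl. split.
  - intros [A [Hsub [[a [Ha Hane]] Hf]]].
    apply (key s l A a Hv Hl); auto.
    split; auto. split. exists a; auto.
    intros b Hb Hbne. apply fhc_hc; auto.
  - intros A HA [x [Hx Hfx]]. exact (key s l A x Hv Hl HA Hx Hfx).
Qed.
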